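(* Assume $4d\Lambda\le1$. There exist positive constants $C_1,C_2$ depending only on $d$ such that for all $(\xi,\eta)\in\mathbf{C}^{d+1}$ with $0<\Re\eta<\Lambda$ and $|\Im\xi|<C_1\sqrt{\Re\eta/\Lambda}$, $$\Lambda\max\big[|e(\xi)|^2,|e(\bar\xi)|^2\big]\le\Big(1+C_2|\Im\xi|^2/[\Re\eta/\Lambda]\Big)\,\big|e^\eta-1+\Lambda e(\bar\xi)^*e(\xi)\big|.$$
   Context: $\Lambda>0$. For $\xi\in\mathbf{C}^d$, $e(\xi)\in\mathbf{C}^d$ is the column vector with entries $e_j(\xi)=e^{-i\mathbf{e}_j\cdot\xi}-1$ ($\mathbf{e}_j$ the $j$-th unit vector, so $\mathbf{e}_j\cdot\xi=\xi_j$); $\bar\xi$ is the complex conjugate of $\xi$, $^*$ denotes conjugate transpose, and $|\cdot|$ is the Euclidean norm on $\mathbf{C}^d$. *)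

(* Defs.v *)
From Stdlib Require Import Reals List.
From Coquelicot Require Import Coquelicot.
Open Scope R_scope.

Definition cexp (z : C) : C :=
  (exp (Re z) * cos (Im z), exp (Re z) * sin (Im z)).

Definition Rsum (d : nat) (f : nat -> R) : R :=
  fold_right Rplus 0 (map f (seq 0 d)).
Definition Csum (d : nat) (f : nat -> C) : C :=
  fold_right Cplus (RtoC 0) (map f (seq 0 d)).

(* Vectors in C^d are represented as functions nat -> C, coordinates j < d. *)
Definition evec (xi : nat -> C) (j : nat) : C :=
  Cminus (cexp (Cmult (0, -1) (xi j))) (RtoC 1).

Definition vconj (xi : nat -> C) (j : nat) : C := Cconj (xi j).

Definition cnorm2 (d : nat) (v : nat -> C) : R :=
  Rsum d (fun j => (Cmod (v j)) ^ 2).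

Definition cdot (d : nat) (u v : nat -> C) : C :=
  Csum d (fun j => Cmult (Cconj (u j)) (v j)).

Definition imnorm2 (d : nat) (xi : nat -> C) : R :=
  Rsum d (fun j => (Im (xi j)) ^ 2).

(* Main.v *)
Require Import Defs.
From Stdlib Require Import Reals List Lra Lia Psatz.
From Coquelicot Require Import Coquelicot.
Open Scope R_scope.

Lemma exp_small y : Rabs y <= 1/32 -> Rabs (exp y - 1) <= 2 * Rabs y.
Proof.
  intros Hy.
  pose proof (exp_ineq1_le y) as H1.
  pose proof (exp_ineq1_le (-y)) as H2.
  assert (Hef : exp y * exp (-y) = 1).
  { rewrite <- exp_plus. replace (y + - y) with 0 by ring. apply exp_0. }
  pose proof (exp_pos y). pose proof (exp_pos (-y)).
  destruct (Rle_or_lt 0 y) as [Hp|Hn].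
  - rewrite (Rabs_pos_eq y) in Hy |- * by lra.
    rewrite Rabs_pos_eq by lra.
    assert (exp y * (1 - y) <= 1) by nra.
    nra.
  - rewrite (Rabs_left y) in Hy |- * by lra.
    assert (exp y <= 1) by nra.
    rewrite Rabs_left1 by lra. lra.
Qed.

Lemma fold_sum_le (l : list nat) (f g : nat -> R) :
  (forall j, In j l -> f j <= g j) ->
  fold_right Rplus 0 (map f l) <= fold_right Rplus 0 (map g l).
Proof.
  induction l as [|a l IH]; simpl; intros H; [lra|].
  apply Rplus_le_compat; auto.
Qed.

Lemma Rsum_le d f g : (forall j, (j < d)%nat -> f j <= g j) -> Rsum d f <= Rsum d g.
Proof.
  intros H. unfold Rsum. apply fold_sum_le. intros j Hj.
  apply in_seq in Hj. apply H. lia.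
Qed.

Lemma Rsum_ext d f g : (forall j, f j = g j) -> Rsum d f = Rsum d g.
Proof. intros H. unfold Rsum. f_equal. apply map_ext. auto. Qed.

Lemma Rsum_plus d f g : Rsum d (fun j => f j + g j) = Rsum d f + Rsum d g.
Proof. unfold Rsum. induction (seq 0 d) as [|a l IH]; simpl; [ring|rewrite IH; ring]. Qed.

Lemma Rsum_scal d k f : Rsum d (fun j => k * f j) = k * Rsum d f.
Proof. unfold Rsum. induction (seq 0 d) as [|a l IH]; simpl; [ring|rewrite IH; ring]. Qed.

Lemma fold_const l k : fold_right Rplus 0 (map (fun _ : nat => k) l) = k * INR (length l).
Proof.
  induction l as [|a l IH]; simpl length; simpl fold_right; [simpl; ring|].
  rewrite IH, S_INR. ring.
Qed.

Lemma Rsum_const d k : Rsum d (fun _ => k) = k * INR d.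
Proof. unfold Rsum. rewrite fold_const, length_seq. reflexivity. Qed.

Lemma Rsum_nonneg d f : (forall j, (j < d)%nat -> 0 <= f j) -> 0 <= Rsum d f.
Proof.
  intros H. apply Rle_trans with (Rsum d (fun _ => 0)); [rewrite Rsum_const; lra | apply Rsum_le; auto].
Qed.

Lemma fold_term (l : list nat) (f : nat -> R) j : (forall i, 0 <= f i) -> In j l -> f j <= fold_right Rplus 0 (map f l).
Proof.
  intros Hf. induction l as [|a l IH]; simpl; [tauto|].
  intros [<-|Hj].
  - assert (0 <= fold_right Rplus 0 (map f l)).
    { clear IH. induction l; simpl; [lra|]. specialize (Hf a0). lra. }
    lra.
  - specialize (IH Hj). specialize (Hf a). lra.
Qed.

Lemma Rsum_term d f j : (forall i, 0 <= f i) -> (j < d)%nat -> f j <= Rsum d f.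
Proof. intros Hf Hj. apply fold_term; auto. apply in_seq. lia. Qed.

Lemma fold_nonneg (l : list nat) (f : nat -> R) : (forall i, 0 <= f i) -> 0 <= fold_right Rplus 0 (map f l).
Proof. intros Hf. induction l as [|a l IH]; simpl; [lra|]. specialize (Hf a). lra. Qed.

Lemma fold_CS (l : list nat) (x y : nat -> R) :
  (fold_right Rplus 0 (map (fun j => x j * y j) l)) ^ 2 <=
  fold_right Rplus 0 (map (fun j => x j ^ 2) l) * fold_right Rplus 0 (map (fun j => y j ^ 2) l).
Proof.
  induction l as [|a l IH]; cbn [map fold_right]; [lra|].
  assert (HA : 0 <= fold_right Rplus 0 (map (fun j => x j ^ 2) l)).
  { apply fold_nonneg. intros; apply pow2_ge_0. }
  assert (HC : 0 <= fold_right Rplus 0 (map (fun j => y j ^ 2) l)).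
  { apply fold_nonneg. intros; apply pow2_ge_0. }
  revert IH HA HC.
  generalize (fold_right Rplus 0 (map (fun j => x j * y j) l)) as X.
  generalize (fold_right Rplus 0 (map (fun j => x j ^ 2) l)) as A.
  generalize (fold_right Rplus 0 (map (fun j => y j ^ 2) l)) as C.
  generalize (x a) as u. generalize (y a) as v.
  intros v u C A X IH HA HC.
  assert (2 * u * v * X <= u^2 * C + A * v^2).
  { destruct (Rle_lt_or_eq_dec 0 A HA) as [Hp|H0].
    - assert (A * (u^2 * C + A * v^2 - 2 * u * v * X) >= 0).
      { assert (H : A * (u^2 * C + A * v^2 - 2 * u * v * X) = (A*v - u*X)^2 + u^2*(A*C - X^2)) by ring.
        rewrite H. pose proof (pow2_ge_0 (A*v-u*X)). pose proof (pow2_ge_0 u). nra. }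
      nra.
    - subst A. assert (X = 0) by nra. subst X. nra. }
  nra.
Qed.

Lemma Rsum_CS d x y : (Rsum d (fun j => x j * y j)) ^ 2 <= Rsum d (fun j => x j ^ 2) * Rsum d (fun j => y j ^ 2).
Proof. apply fold_CS. Qed.

Lemma evec_eq xi j : evec xi j =
  (exp (Im (xi j)) * cos (Re (xi j)) - 1, - (exp (Im (xi j)) * sin (Re (xi j)))).
Proof.
  unfold evec, cexp. destruct (xi j) as [a b]. unfold Cminus, Cmult, Cplus, Copp, RtoC, Re, Im. simpl.
  replace (0 * a - -1 * b) with b by ring.
  replace (0 * b + -1 * a) with (- a) by ring.
  rewrite cos_neg, sin_neg. f_equal; ring.
Qed.

Lemma Cmod_sq z : Cmod z ^ 2 = fst z ^ 2 + snd z ^ 2.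
Proof. unfold Cmod. rewrite pow2_sqrt; [reflexivity|nra]. Qed.

Lemma Cmod_le_abs z : Cmod z <= Rabs (fst z) + Rabs (snd z).
Proof.
  pose proof (Cmod_ge_0 z). pose proof (Rabs_pos (fst z)). pose proof (Rabs_pos (snd z)).
  assert (Cmod z ^ 2 <= (Rabs (fst z) + Rabs (snd z)) ^ 2).
  { rewrite Cmod_sq, <- (pow2_abs (fst z)), <- (pow2_abs (snd z)). nra. }
  nra.
Qed.

Lemma cexp_mod eta : Cmod (cexp eta) = exp (Re eta).
Proof.
  unfold Cmod, cexp. cbn [fst snd]. pose proof (sin2_cos2 (Im eta)). unfold Rsqr in H.
  replace ((exp (Re eta) * cos (Im eta)) ^ 2 + (exp (Re eta) * sin (Im eta)) ^ 2)
    with (exp (Re eta) ^ 2) by (rewrite <- (Rmult_1_r (exp (Re eta) ^ 2)), <- H; ring).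
  apply sqrt_pow2. pose proof (exp_pos (Re eta)). lra.
Qed.

Lemma Csum_fst d f : fst (Csum d f) = Rsum d (fun j => fst (f j)).
Proof. unfold Csum, Rsum. induction (seq 0 d) as [|a l IH]; simpl; [reflexivity|rewrite IH; reflexivity]. Qed.
Lemma Csum_snd d f : snd (Csum d f) = Rsum d (fun j => snd (f j)).
Proof. unfold Csum, Rsum. induction (seq 0 d) as [|a l IH]; simpl; [reflexivity|rewrite IH; reflexivity]. Qed.

Lemma term_P xi j : Cmod (evec xi j) ^ 2 =
  exp (Im (xi j)) ^ 2 - 2 * exp (Im (xi j)) * cos (Re (xi j)) + 1.
Proof.
  rewrite Cmod_sq, evec_eq. simpl fst; simpl snd.
  pose proof (sin2_cos2 (Re (xi j))). unfold Rsqr in H.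
  generalize dependent (exp (Im (xi j))). intros. simpl in *. nra.
Qed.

Lemma term_Q xi j : Cmod (evec (vconj xi) j) ^ 2 =
  exp (- Im (xi j)) ^ 2 - 2 * exp (- Im (xi j)) * cos (Re (xi j)) + 1.
Proof.
  rewrite term_P. unfold vconj, Cconj. reflexivity.
Qed.

Lemma EF b : exp b * exp (- b) = 1.
Proof. rewrite <- exp_plus. replace (b + - b) with 0 by ring. apply exp_0. Qed.

Lemma term_dot xi j : Cmult (Cconj (evec (vconj xi) j)) (evec xi j) =
  (2 - cos (Re (xi j)) * (exp (Im (xi j)) + exp (- Im (xi j))),
   sin (Re (xi j)) * (exp (Im (xi j)) - exp (- Im (xi j)))).
Proof.
  rewrite !evec_eq. unfold vconj, Cconj, Cmult, Re, Im. destruct (xi j) as [a b]. cbn [fst snd].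
  pose proof (sin2_cos2 a). unfold Rsqr in H.
  pose proof (EF b).
  generalize dependent (exp b). generalize dependent (exp (- b)).
  intros. f_equal; nra.
Qed.

Lemma PQ_bound G c bb : Rabs (G - 1) <= 2 * bb -> -1 <= c <= 1 ->
  G ^ 2 - 2 * G * c + 1 <= 2 * (1 - c) + 4 * bb ^ 2 + 4 * ((1 - c) * bb).
Proof.
  intros HG Hc.
  assert (H1 : (G - 1) ^ 2 <= 4 * bb ^ 2).
  { rewrite <- pow2_abs. pose proof (Rabs_pos (G-1)). nra. }
  assert (H2 : G <= 1 + 2 * bb).
  { pose proof (Rle_abs (G - 1)). lra. }
  nra.
Qed.

Lemma coord_bounds a b : Rabs b <= 1/32 ->
  let E := exp b in let F := exp (- b) in let c := cos a in let s := sin a in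
  E ^ 2 - 2 * E * c + 1 <= 2 * (1 - c) + 4 * b ^ 2 + 4 * ((1 - c) * Rabs b) /\
  F ^ 2 - 2 * F * c + 1 <= 2 * (1 - c) + 4 * b ^ 2 + 4 * ((1 - c) * Rabs b) /\
  2 * (1 - c) - 4 * b ^ 2 <= 2 - c * (E + F) /\
  2 - c * (E + F) <= 4 + 4 * b ^ 2 /\
  Rabs (s * (E - F)) <= 4 * (Rabs s * Rabs b).
Proof.
  intros Hb E F c s.
  assert (HE : Rabs (E - 1) <= 2 * Rabs b) by (apply exp_small; auto).
  assert (HF : Rabs (F - 1) <= 2 * Rabs b).
  { rewrite <- (Rabs_Ropp b). apply exp_small. rewrite Rabs_Ropp. auto. }
  assert (Hc : -1 <= c <= 1) by (split; [apply COS_bound | apply COS_bound]).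
  assert (HEF : E * F = 1) by apply EF.
  assert (HEp : 0 < E) by apply exp_pos.
  assert (HFp : 0 < F) by apply exp_pos.
  assert (Hb2 : b ^ 2 = Rabs b ^ 2) by (rewrite pow2_abs; auto).
  assert (HS1 : 0 <= E + F - 2).
  { assert (E + F - 2 = F * (E - 1) ^ 2) by nra. pose proof (pow2_ge_0 (E-1)). nra. }
  assert (HS2 : E + F - 2 <= 4 * b ^ 2).
  { assert (E + F - 2 = (E - 1) * (1 - F)) by nra.
    pose proof (Rle_abs ((E - 1) * (1 - F))). rewrite Rabs_mult in H0.
    replace (1 - F) with (- (F - 1)) in H0 by ring. rewrite Rabs_Ropp in H0.
    pose proof (Rabs_pos (E-1)). pose proof (Rabs_pos (F-1)). nra. }
  split; [rewrite Hb2 at 1; apply PQ_bound; auto|].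
  split; [rewrite Hb2 at 1; apply PQ_bound; auto|].
  split; [nra|]. split; [nra|].
  rewrite Rabs_mult.
  assert (Rabs (E - F) <= 4 * Rabs b).
  { replace (E - F) with ((E - 1) - (F - 1)) by ring.
    pose proof (Rabs_triang (E - 1) (- (F - 1))). rewrite Rabs_Ropp in H. 
    unfold Rminus at 1. lra. }
  pose proof (Rabs_pos s). nra.
Qed.

Lemma key_poly (e q T Y1 Y2 : R) : 0 < e -> 0 <= q -> q <= 1/1024 -> 0 <= T ->
  0 <= Y1 -> 0 <= Y2 -> Y1 ^ 2 <= 2 * T * (q * e) -> Y2 ^ 2 <= 2 * T * (q * e) ->
  2 * T + 4 * (q * e) + 4 * Y1 <= (1 + 100 * q) * (e + 2 * T - 12 * (q * e) - 4 * Y2).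
Proof.
  intros He Hq Hq1 HT HY1 HY2 H1 H2.
  assert (Hm : 0 <= q * T * e) by (apply Rmult_le_pos; [apply Rmult_le_pos|]; lra).
  assert (Hsq : (4 * Y1 + 4.4 * Y2) ^ 2 <= (e + 200 * q * T) ^ 2).
  { assert ((e + 200 * q * T) ^ 2 = (e - 200 * q * T) ^ 2 + 800 * (q * T * e)) by ring.
    pose proof (pow2_ge_0 (e - 200 * q * T)).
    pose proof (pow2_ge_0 (4.4 * Y1 - 4 * Y2)).
    nra. }
  assert (Hkey : 4 * Y1 + 4.4 * Y2 <= e + 200 * q * T).
  { assert (0 <= e + 200 * q * T) by (pose proof (Rmult_le_pos _ _ Hq HT); nra). nra. }
  assert (q * (1200 * q * e) <= q * (84 * e)) by (apply Rmult_le_compat_l; nra).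
  assert (q * (400 * Y2) <= 0.4 * Y2) by nra.
  nra.
Qed.

Lemma final_arith (Lam r T B Y1 Y2 U V M L dR : R) :
  0 < Lam -> 4 * dR * Lam <= 1 -> 0 < r -> r < Lam -> B < (r / Lam) / 1024 ->
  0 <= T -> 0 <= B -> 0 <= Y1 -> 0 <= Y2 ->
  Y1 ^ 2 <= 2 * T * B -> Y2 ^ 2 <= 2 * T * B ->
  M <= 2 * T + 4 * B + 4 * Y1 ->
  2 * T - 4 * B <= U -> U <= 4 * dR + 4 * B -> Rabs V <= 4 * Y2 ->
  1 + r - Rabs (1 - Lam * U) - Lam * Rabs V <= L ->
  Lam * M <= (1 + 100 * B / (r / Lam)) * L.
Proof.
  intros HL Hd Hr HrL HB HT HB0 HY1 HY2 H1 H2 HM HU1 HU2 HV HLL.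
  set (e := r / Lam) in *.
  assert (He : 0 < e) by (unfold e; apply Rdiv_lt_0_compat; lra).
  assert (Hre : r = e * Lam) by (unfold e; field; lra).
  set (q := B / e).
  assert (HBq : B = q * e) by (unfold q; field; lra).
  assert (Hq0 : 0 <= q) by (unfold q; apply Rmult_le_pos; [lra| left; apply Rinv_0_lt_compat; lra]).
  assert (Hq1 : q <= 1/1024).
  { unfold q. apply Rle_trans with ((e/1024)/e). 
    - apply Rmult_le_compat_r; [left; apply Rinv_0_lt_compat; lra| lra].
    - right. field. lra. }
  assert (Hfac : 100 * B / e = 100 * q) by (unfold q; field; lra).
  rewrite Hfac.
  assert (HabsU : Rabs (1 - Lam * U) <= 1 - Lam * U + 8 * Lam * B).
  { destruct (Rle_or_lt 0 (1 - Lam * U)).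
    - rewrite Rabs_pos_eq by lra. nra.
    - rewrite Rabs_left by lra. nra. }
  assert (HLD : Lam * (e + 2 * T - 12 * (q * e) - 4 * Y2) <= L).
  { rewrite <- HBq. nra. }
  rewrite HBq in H1, H2.
  pose proof (key_poly e q T Y1 Y2 He Hq0 Hq1 HT HY1 HY2 H1 H2) as Hk.
  rewrite <- HBq in Hk.
  apply Rle_trans with (Lam * (2 * T + 4 * B + 4 * Y1)); [apply Rmult_le_compat_l; lra|].
  apply Rle_trans with ((1 + 100 * q) * (Lam * (e + 2 * T - 12 * (q * e) - 4 * Y2))).
  - rewrite <- HBq. nra.
  - apply Rmult_le_compat_l; lra.
Qed.

Lemma Rsum_lin2 d a b f g : Rsum d (fun j => a * f j + b * g j) = a * Rsum d f + b * Rsum d g.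
Proof. rewrite Rsum_plus, Rsum_scal, Rsum_scal. reflexivity. Qed.

Lemma Rsum_lin3 d a b c f g h : Rsum d (fun j => a * f j + b * g j + c * h j) = a * Rsum d f + b * Rsum d g + c * Rsum d h.
Proof.
  rewrite (Rsum_plus d (fun j => a * f j + b * g j) (fun j => c * h j)).
  rewrite Rsum_lin2, Rsum_scal. reflexivity.
Qed.

Lemma L_bound z w Lam : 0 < Lam ->
  Cmod z - (Rabs (1 - Lam * fst w) + Lam * Rabs (snd w)) <=
  Cmod (Cplus (Cminus z (RtoC 1)) (Cmult (RtoC Lam) w)).
Proof.
  intros HL.
  assert (Heq : z = Cplus (Cplus (Cminus z (RtoC 1)) (Cmult (RtoC Lam) w)) (Cminus (RtoC 1) (Cmult (RtoC Lam) w))).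
  { destruct z, w. unfold Cplus, Cminus, Cmult, Copp, RtoC. simpl. f_equal; ring. }
  pose proof (Cmod_triangle (Cplus (Cminus z (RtoC 1)) (Cmult (RtoC Lam) w)) (Cminus (RtoC 1) (Cmult (RtoC Lam) w))) as Ht.
  rewrite <- Heq in Ht.
  pose proof (Cmod_le_abs (Cminus (RtoC 1) (Cmult (RtoC Lam) w))) as Ha.
  replace (fst (Cminus (RtoC 1) (Cmult (RtoC Lam) w))) with (1 - Lam * fst w) in Ha
    by (destruct w; unfold Cminus, Cplus, Copp, Cmult, RtoC; simpl; ring).
  replace (snd (Cminus (RtoC 1) (Cmult (RtoC Lam) w))) with (- (Lam * snd w)) in Ha
    by (destruct w; unfold Cminus, Cplus, Copp, Cmult, RtoC; simpl; ring).
  rewrite Rabs_Ropp, Rabs_mult, (Rabs_pos_eq Lam) in Ha by lra.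
  lra.
Qed.

Theorem lemma5p1 (d : nat) (hd : (1 <= d)%nat) :
  exists C1 C2 : R, 0 < C1 /\ 0 < C2 /\
  forall (Lam : R), 0 < Lam -> 4 * INR d * Lam <= 1 ->
  forall (xi : nat -> C) (eta : C),
    0 < Re eta -> Re eta < Lam ->
    sqrt (imnorm2 d xi) < C1 * sqrt (Re eta / Lam) ->
    Lam * Rmax (cnorm2 d (evec xi)) (cnorm2 d (evec (vconj xi)))
    <= (1 + C2 * imnorm2 d xi / (Re eta / Lam)) *
       Cmod (Cplus (Cminus (cexp eta) (RtoC 1))
                   (Cmult (RtoC Lam) (cdot d (evec (vconj xi)) (evec xi)))).
Proof.
  exists (1/32), 100. split; [lra|]. split; [lra|].
  intros Lam HL Hd xi eta Hr HrL Hsq.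
  set (B := imnorm2 d xi) in *.
  assert (HB0 : 0 <= B).
  { unfold B, imnorm2. apply Rsum_nonneg. intros; apply pow2_ge_0. }
  assert (He0 : 0 <= Re eta / Lam).
  { apply Rmult_le_pos; [lra| left; apply Rinv_0_lt_compat; lra]. }
  assert (He1 : Re eta / Lam < 1).
  { apply Rmult_lt_reg_r with Lam; [lra|]. unfold Rdiv. rewrite Rmult_assoc, Rinv_l; lra. }
  assert (HB : B < (Re eta / Lam) / 1024).
  { pose proof (sqrt_pos B). pose proof (sqrt_pos (Re eta / Lam)).
    assert (sqrt B ^ 2 < (1/32 * sqrt (Re eta / Lam)) ^ 2) by nra.
    rewrite pow2_sqrt in H1 by lra.
    replace ((1/32 * sqrt (Re eta / Lam)) ^ 2) with ((sqrt (Re eta / Lam)) ^ 2 / 1024) in H1 by field.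
    rewrite pow2_sqrt in H1 by lra. lra. }
  assert (Hbj : forall j, (j < d)%nat -> Rabs (Im (xi j)) <= 1/32).
  { intros j Hj.
    assert (Im (xi j) ^ 2 <= B).
    { unfold B, imnorm2. apply (Rsum_term d (fun j => Im (xi j) ^ 2)); auto. intros; apply pow2_ge_0. }
    rewrite <- pow2_abs in H. pose proof (Rabs_pos (Im (xi j))). nra. }
  set (T := Rsum d (fun j => 1 - cos (Re (xi j)))).
  set (Y1 := Rsum d (fun j => (1 - cos (Re (xi j))) * Rabs (Im (xi j)))).
  set (Y2 := Rsum d (fun j => Rabs (sin (Re (xi j))) * Rabs (Im (xi j)))).
  assert (Hc : forall j, -1 <= cos (Re (xi j)) <= 1) by (intros; split; apply COS_bound).
  assert (HT : 0 <= T) by (apply Rsum_nonneg; intros j _; specialize (Hc j); lra).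
  assert (HY1 : 0 <= Y1).
  { apply Rsum_nonneg; intros j _; specialize (Hc j). apply Rmult_le_pos; [lra|apply Rabs_pos]. }
  assert (HY2 : 0 <= Y2).
  { apply Rsum_nonneg; intros j _. apply Rmult_le_pos; apply Rabs_pos. }
  assert (HBabs : Rsum d (fun j => Rabs (Im (xi j)) ^ 2) = B).
  { unfold B, imnorm2. apply Rsum_ext. intros; apply pow2_abs. }
  assert (HCS1 : Y1 ^ 2 <= 2 * T * B).
  { pose proof (Rsum_CS d (fun j => 1 - cos (Re (xi j))) (fun j => Rabs (Im (xi j)))) as H.
    cbv beta in H. rewrite HBabs in H. fold Y1 in H.
    assert (Rsum d (fun j => (1 - cos (Re (xi j))) ^ 2) <= Rsum d (fun j => 2 * (1 - cos (Re (xi j))))).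
    { apply Rsum_le. intros j _. specialize (Hc j). nra. }
    rewrite Rsum_scal in H0. fold T in H0.
    assert (0 <= Rsum d (fun j => (1 - cos (Re (xi j))) ^ 2)).
    { apply Rsum_nonneg. intros; apply pow2_ge_0. }
    nra. }
  assert (HCS2 : Y2 ^ 2 <= 2 * T * B).
  { pose proof (Rsum_CS d (fun j => Rabs (sin (Re (xi j)))) (fun j => Rabs (Im (xi j)))) as H.
    cbv beta in H. rewrite HBabs in H. fold Y2 in H.
    assert (Rsum d (fun j => Rabs (sin (Re (xi j))) ^ 2) <= Rsum d (fun j => 2 * (1 - cos (Re (xi j))))).
    { apply Rsum_le. intros j _. specialize (Hc j). rewrite pow2_abs.
      pose proof (sin2_cos2 (Re (xi j))). unfold Rsqr in H0. nra. }
    rewrite Rsum_scal in H0. fold T in H0.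
    assert (0 <= Rsum d (fun j => Rabs (sin (Re (xi j))) ^ 2)).
    { apply Rsum_nonneg. intros; apply pow2_ge_0. }
    nra. }
  assert (HM : Rmax (cnorm2 d (evec xi)) (cnorm2 d (evec (vconj xi))) <= 2 * T + 4 * B + 4 * Y1).
  { unfold T, Y1, B, imnorm2. rewrite <- Rsum_lin3.
    apply Rmax_lub; unfold cnorm2; apply Rsum_le; intros j Hj;
      destruct (coord_bounds (Re (xi j)) (Im (xi j)) (Hbj j Hj)) as (P1 & P2 & _).
    - rewrite term_P. exact P1.
    - rewrite term_Q. exact P2. }
  set (w := cdot d (evec (vconj xi)) (evec xi)).
  assert (HU : fst w = Rsum d (fun j => 2 - cos (Re (xi j)) * (exp (Im (xi j)) + exp (- Im (xi j))))).
  { unfold w, cdot. rewrite Csum_fst. apply Rsum_ext. intros j. rewrite term_dot. reflexivity. }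
  assert (HV : snd w = Rsum d (fun j => sin (Re (xi j)) * (exp (Im (xi j)) - exp (- Im (xi j))))).
  { unfold w, cdot. rewrite Csum_snd. apply Rsum_ext. intros j. rewrite term_dot. reflexivity. }
  assert (HU1 : 2 * T - 4 * B <= fst w).
  { rewrite HU. unfold T, B, imnorm2. replace (2 * _ - 4 * _) with
      (2 * Rsum d (fun j => 1 - cos (Re (xi j))) + (-4) * Rsum d (fun j => Im (xi j) ^ 2)) by ring.
    rewrite <- Rsum_lin2. apply Rsum_le. intros j Hj.
    destruct (coord_bounds (Re (xi j)) (Im (xi j)) (Hbj j Hj)) as (_ & _ & R1 & _). lra. }
  assert (HU2 : fst w <= 4 * INR d + 4 * B).
  { rewrite HU. unfold B, imnorm2. rewrite <- (Rmult_1_l (INR d)), <- Rsum_const.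
    rewrite <- Rsum_lin2. apply Rsum_le. intros j Hj.
    destruct (coord_bounds (Re (xi j)) (Im (xi j)) (Hbj j Hj)) as (_ & _ & _ & R2 & _). lra. }
  assert (HVb : Rabs (snd w) <= 4 * Y2).
  { rewrite HV. apply Rabs_le. split.
    - replace (- (4 * Y2)) with ((-4) * Y2) by ring. unfold Y2. rewrite <- Rsum_scal.
      apply Rsum_le. intros j Hj.
      destruct (coord_bounds (Re (xi j)) (Im (xi j)) (Hbj j Hj)) as (_ & _ & _ & _ & I1).
      apply Rabs_le_between in I1. lra.
    - unfold Y2. rewrite <- Rsum_scal. apply Rsum_le. intros j Hj.
      destruct (coord_bounds (Re (xi j)) (Im (xi j)) (Hbj j Hj)) as (_ & _ & _ & _ & I1).
      apply Rabs_le_between in I1. lra. }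
  pose proof (L_bound (cexp eta) w Lam HL) as HLb.
  rewrite cexp_mod in HLb.
  pose proof (exp_ineq1_le (Re eta)).
  apply (final_arith Lam (Re eta) T B Y1 Y2 (fst w) (snd w) _ _ (INR d)); auto; lra.
Qed.
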